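(* For every integer $m\ge 1$ a generalised golden ratio $\mathcal{G}(m)$ exists, and $$\mathcal{G}(m)=\begin{cases} k+1 & \text{if } m=2k,\\[2pt] \dfrac{k+1+\sqrt{k^{2}+6k+5}}{2} & \text{if } m=2k+1,\end{cases}$$ where $k$ is a nonnegative integer.
   Context: Let $m\in\mathbb{N}$ and $\beta\in(1,m+1]$. For $x\in[0,\frac{m}{\beta-1}]$ let $\Sigma_{\beta,m}(x)=\{(\epsilon_i)_{i=1}^\infty\in\{0,\ldots,m\}^{\mathbb{N}}:\sum_{i=1}^\infty \epsilon_i\beta^{-i}=x\}$ be the set of $\beta$-expansions of $x$. A real number $\mathcal{G}(m)$ is called a generalised golden ratio for $m$ if (i) for every $\beta\in(1,\mathcal{G}(m))$ the set $\Sigma_{\beta,m}(x)$ is uncountable for every $x\in(0,\frac{m}{\beta-1})$, and (ii) for every $\beta\in(\mathcal{G}(m),m+1]$ there exists $x\in(0,\frac{m}{\beta-1})$ with $|\Sigma_{\beta,m}(x)|=1$. *)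

(* Defs.v *)
From Stdlib Require Import Reals Lra Lia.
Open Scope R_scope.

(* A digit sequence (eps_i)_{i>=1} is encoded as e : nat -> nat with
   eps_{i+1} = e i. *)
Definition digits (m : nat) (e : nat -> nat) : Prop := forall i, (e i <= m)%nat.

Definition is_expansion (beta : R) (m : nat) (x : R) (e : nat -> nat) : Prop :=
  digits m e /\ infinite_sum (fun i => INR (e i) / beta ^ (S i)) x.

Definition Sigma (beta : R) (m : nat) (x : R) : (nat -> nat) -> Prop :=
  fun e => is_expansion beta m x e.

Definition countable_set {T : Type} (S : T -> Prop) : Prop :=
  exists f : T -> nat, forall a b, S a -> S b -> f a = f b -> a = b.

Definition uncountable_set {T : Type} (S : T -> Prop) : Prop := ~ countable_set S.

Definition singleton_set {T : Type} (S : T -> Prop) : Prop :=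
  exists a, S a /\ forall b, S b -> b = a.

Definition is_generalised_golden_ratio (m : nat) (G : R) : Prop :=
  (forall beta, 1 < beta < G ->
     forall x, 0 < x < INR m / (beta - 1) -> uncountable_set (Sigma beta m x)) /\
  (forall beta, G < beta <= INR m + 1 ->
     exists x, 0 < x < INR m / (beta - 1) /\ singleton_set (Sigma beta m x)).

(* Main.v *)
Require Import Defs.
From Stdlib Require Import Reals Lra Lia ClassicalEpsilon FunctionalExtensionality Classical.
Open Scope R_scope.

Definition MM (m : nat) (b : R) := INR m / (b - 1).

Lemma bM : forall m b, 1 < b -> b * MM m b = INR m + MM m b.
Proof. intros; unfold MM; field; lra. Qed.

Lemma pow_big : forall b a B, 1 < b -> 0 < a -> exists N, forall n, (n >= N)%nat -> B < b ^ n * a.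
Proof.
  intros b a B Hb Ha.
  destruct (Pow_x_infinity b ltac:(rewrite Rabs_right; lra) (Rabs B / a + 1)) as [N HN].

  exists N; intros n Hn. specialize (HN n Hn).
  rewrite Rabs_right in HN by (apply Rle_ge, pow_le; lra).
  assert (B <= Rabs B) by apply Rle_abs.
  assert (Rabs B / a * a = Rabs B) by (field; lra).
  assert ((Rabs B / a + 1) * a <= b ^ n * a) by (apply Rmult_le_compat_r; lra).
  nra.
Qed.

Lemma run_exp : forall (b : R) (Y : nat -> R) (e : nat -> nat) (B : R), 1 < b ->
  (forall n, Y (S n) = b * Y n - INR (e n)) -> (forall n, Rabs (Y n) <= B) ->
  infinite_sum (fun i => INR (e i) / b ^ (S i)) (Y 0%nat).
Proof.
  intros b Y e B Hb HY HB.
  assert (Hps : forall N, sum_f_R0 (fun i => INR (e i) / b ^ (S i)) N = Y 0%nat - Y (S N) / b ^ (S N)).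
  { induction N.
    - simpl. rewrite HY. field. lra.
    - rewrite tech5, IHN. rewrite (HY (S N)).
      assert (b ^ (S N) <> 0) by (apply pow_nonzero; lra).
      assert (b ^ N <> 0) by (apply pow_nonzero; lra).
      simpl pow. field. split; lra. }
  intros eps Heps.
  assert (HB0 : 0 <= B) by (specialize (HB 0%nat); pose proof (Rabs_pos (Y 0%nat)); lra).
  destruct (pow_big b eps B Hb Heps) as [N HN].
  exists N; intros n Hn. rewrite Hps. unfold Rdist.
  replace (Y 0%nat - Y (S n) / b ^ S n - Y 0%nat) with (- (Y (S n) / b ^ S n)) by ring.
  rewrite Rabs_Ropp.
  assert (Hp : 0 < b ^ S n) by (apply pow_lt; lra).
  unfold Rdiv. rewrite Rabs_mult, Rabs_inv, (Rabs_right (b ^ S n)) by lra.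
  assert (HN' := HN (S n) ltac:(lia)).
  specialize (HB (S n)).
  apply (Rmult_lt_reg_r (b ^ S n)); auto.
  rewrite Rmult_assoc, Rinv_l by lra. nra.
Qed.

Lemma nat_close : forall p q : nat, INR p - INR q < 1 -> INR q - INR p < 1 -> p = q.
Proof.
  intros p q H1 H2. destruct (Nat.lt_total p q) as [H|[H|H]]; auto.
  - apply le_INR in H. rewrite S_INR in H. lra.
  - apply le_INR in H. rewrite S_INR in H. lra.
Qed.

Lemma cantor : forall g : (nat -> bool) -> nat, (forall s t, g s = g t -> s = t) -> False.
Proof.
  intros g Hg.
  set (h := fun n => epsilon (inhabits (fun _ : nat => true)) (fun s => g s = n)).
  set (d := fun n => negb (h n n)).
  set (n := g d).
  assert (Hh : h n = d).
  { apply Hg. unfold h. apply epsilon_spec. exists d; reflexivity. }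
  assert (E : d n = negb (h n n)) by reflexivity.
  rewrite Hh in E. destruct (d n); discriminate.
Qed.

Lemma Rdiv_le_0_compat : forall a b, 0 <= a -> 0 < b -> 0 <= a / b.
Proof. intros; unfold Rdiv; apply Rmult_le_pos; [auto | left; apply Rinv_0_lt_compat; auto]. Qed.

Fixpoint PS (b : R) (e : nat -> nat) (n : nat) : R :=
  match n with O => 0 | S n' => PS b e n' + INR (e n') / b ^ (S n') end.

Lemma PS_sum : forall b e N, sum_f_R0 (fun i => INR (e i) / b ^ (S i)) N = PS b e (S N).
Proof. intros b e N; induction N. simpl; ring. rewrite tech5, IHN. reflexivity. Qed.

Lemma PS_bound : forall m b e, 1 < b -> digits m e -> forall n k,
  0 <= PS b e (n + k) - PS b e n <= MM m b / b ^ n - MM m b / b ^ (n + k).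
Proof.
  intros m b e Hb He n k. induction k.
  - rewrite Nat.add_0_r. lra.
  - rewrite Nat.add_succ_r. simpl PS.
    assert (b ^ (n + k) > 0) by (apply pow_lt; lra).
    assert (Hid : MM m b / b ^ (n + k) - MM m b / b ^ S (n + k) = INR m / b ^ S (n+k)).
    { unfold MM. simpl pow. field. lra. }
    assert (INR (e (n + k)%nat) <= INR m) by (apply le_INR, He).
    assert (0 <= INR (e (n + k)%nat)) by apply pos_INR.
    assert (Hq : b ^ S (n+k) > 0) by (apply pow_lt; lra).
    assert (0 <= INR (e (n + k)%nat) / b ^ S (n+k)) by (apply Rdiv_le_0_compat; lra).
    assert (INR (e (n + k)%nat) / b ^ S (n+k) <= INR m / b ^ S (n+k))
      by (apply Rmult_le_compat_r; [left; apply Rinv_0_lt_compat; lra | lra]).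
    change (b * b ^ (n + k)) with (b ^ S (n + k)). lra.
Qed.

Lemma tail_bound : forall m b x e, 1 < b -> is_expansion b m x e -> forall n,
  0 <= b ^ n * (x - PS b e n) <= MM m b.
Proof.
  intros m b x e Hb [Hd Hs] n.
  assert (Hp : b ^ n > 0) by (apply pow_lt; lra).
  assert (Hx : 0 <= x - PS b e n <= MM m b / b ^ n).
  { split.
    - apply Rnot_lt_le; intro Hlt.
      destruct (Hs (PS b e n - x) ltac:(lra)) as [N HN].
      specialize (HN (N + n)%nat ltac:(lia)). rewrite PS_sum in HN. unfold Rdist in HN.
      replace (S (N + n)) with (n + S N)%nat in HN by lia.
      pose proof (PS_bound m b e Hb Hd n (S N)).
      assert (MM m b / b ^ (n + S N) >= 0).
      { unfold MM. apply Rle_ge. apply Rdiv_le_0_compat. apply Rdiv_le_0_compat. apply pos_INR. lra.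
        apply pow_lt; lra. }
      apply Rabs_def2 in HN. lra.
    - apply Rnot_lt_le; intro Hlt.
      destruct (Hs (x - PS b e n - MM m b / b ^ n) ltac:(lra)) as [N HN].
      specialize (HN (N + n)%nat ltac:(lia)). rewrite PS_sum in HN. unfold Rdist in HN.
      replace (S (N + n)) with (n + S N)%nat in HN by lia.
      pose proof (PS_bound m b e Hb Hd n (S N)).
      assert (MM m b / b ^ (n + S N) >= 0).
      { unfold MM. apply Rle_ge. apply Rdiv_le_0_compat. apply Rdiv_le_0_compat. apply pos_INR. lra.
        apply pow_lt; lra. }
      apply Rabs_def2 in HN. lra. }
  split.
  - apply Rmult_le_pos; lra.
  - assert (b ^ n * (MM m b / b ^ n) = MM m b) by (field; lra).
    assert (b ^ n * (x - PS b e n) <= b ^ n * (MM m b / b ^ n)) by (apply Rmult_le_compat_l; lra).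
    lra.
Qed.

Lemma unique_exp : forall m b x (Y : nat -> R) (a : nat -> nat), 1 < b ->
  Y 0%nat = x -> (forall n, Y (S n) = b * Y n - INR (a n)) ->
  (forall n, MM m b - 1 < Y n < 1) ->
  forall e, is_expansion b m x e -> e = a.
Proof.
  intros m b x Y a Hb HY0 HY HYb e He.
  set (Z := fun n => b ^ n * (x - PS b e n)).
  assert (HZ : forall n, Z (S n) = b * Z n - INR (e n)).
  { intro n. unfold Z. simpl PS. simpl pow.
    assert (b ^ n <> 0) by (apply pow_nonzero; lra). field. split; lra. }
  assert (HZb : forall n, 0 <= Z n <= MM m b) by (intro; apply (tail_bound m b x e Hb He)).
  assert (Hall : forall n, Z n = Y n).
  { induction n.
    - unfold Z. simpl. rewrite HY0. ring.
    - assert (Heq : e n = a n).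
      { apply nat_close.
        + pose proof (HZ n) as H1; rewrite IHn in H1; pose proof (HY n); specialize (HZb (S n)); specialize (HYb (S n)). lra.
        + pose proof (HZ n) as H1; rewrite IHn in H1; pose proof (HY n); specialize (HZb (S n)); specialize (HYb (S n)). lra. }
      rewrite HZ, HY, IHn, Heq. reflexivity. }
  apply functional_extensionality. intro n.
  apply nat_close.
  - pose proof (HZ n) as H1; rewrite (Hall n), (Hall (S n)) in H1; pose proof (HY n). lra.
  - pose proof (HZ n) as H1; rewrite (Hall n), (Hall (S n)) in H1; pose proof (HY n). lra.
Qed.

Definition adm (m : nat) (b y : R) (d : nat) : Prop :=
  (d <= m)%nat /\ 0 < b * y - INR d < MM m b.
Definition brp (m : nat) (b y : R) : Prop :=
  exists d, (d < m)%nat /\ adm m b y d /\ adm m b y (S d).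
Definition Hyp (m : nat) (b : R) : Prop :=
  1 < b /\ 1 < MM m b /\ (0 < m)%nat /\ forall e, (e <= m)%nat ->
    ((e < m)%nat /\ INR e < INR m + MM m b - b - 1) \/ ((0 < e)%nat /\ b - MM m b + 1 < INR e).

Lemma nb_up : forall m b y d, ~ brp m b y -> adm m b y d -> (d < m)%nat -> b * y - INR d <= 1.
Proof.
  intros m b y d Hn [Hd Ha] Hlt. apply Rnot_lt_le; intro H. apply Hn.
  exists d; split; auto; split; [split; auto|].
  split; [lia|]. rewrite S_INR. lra.
Qed.

Lemma nb_down : forall m b y d, ~ brp m b y -> adm m b y d -> (0 < d)%nat -> MM m b - 1 <= b * y - INR d.
Proof.
  intros m b y d Hn [Hd Ha] Hlt. destruct d as [|d]; [lia|].
  apply Rnot_lt_le; intro H. apply Hn. rewrite S_INR in *.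
  exists d; split; [lia|]; split; [|split; auto; rewrite S_INR; lra].
  split; [lia|]. lra.
Qed.

Lemma core_a : forall m b y e, Hyp m b -> ~ brp m b y -> adm m b y e -> y <= 1 ->
  (0 < e)%nat -> b - MM m b + 1 < INR e -> False.
Proof.
  intros m b y e [Hb _] Hn Ha Hy He Hlt.
  pose proof (nb_down m b y e Hn Ha He). nra.
Qed.

Lemma core_b : forall m b y e, Hyp m b -> ~ brp m b y -> adm m b y e -> MM m b - 1 <= y ->
  (e < m)%nat -> INR e < INR m + MM m b - b - 1 -> False.
Proof.
  intros m b y e [Hb _] Hn Ha Hy He Hlt.
  pose proof (nb_up m b y e Hn Ha He). pose proof (bM m b Hb). nra.
Qed.

Definition run (m : nat) (b : R) (Y : nat -> R) (D : nat -> nat) : Prop :=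
  forall n, adm m b (Y n) (D n) /\ 0 < Y n < MM m b /\ Y (S n) = b * Y n - INR (D n).

Lemma noinf : forall m b Y D, Hyp m b -> run m b Y D -> (forall n, ~ brp m b (Y n)) -> False.
Proof.
  intros m b Y D Hh Hr Hn.
  pose proof Hh as [Hb [HM [Hm He]]].
  assert (C1 : forall n, D n = 0%nat \/ D n = m).
  { intro n. destruct (Hr n) as [[Hd Ha] [Hy Hs]].
    destruct (Nat.eq_dec (D n) 0) as [|H0]; [left; auto|].
    destruct (Nat.eq_dec (D n) m) as [|H1]; [right; auto|]. exfalso.
    assert (Hup : Y (S n) <= 1) by (rewrite Hs; apply (nb_up m b); [auto | split; auto | lia]).
    assert (Hdn : MM m b - 1 <= Y (S n)) by (rewrite Hs; apply (nb_down m b); [auto | split; auto | lia]).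
    destruct (Hr (S n)) as [Ha' _].
    destruct (He (D (S n)) (proj1 Ha')) as [[E1 E2]|[E1 E2]].
    - apply (core_b m b (Y (S n)) (D (S n))); auto.
    - apply (core_a m b (Y (S n)) (D (S n))); auto. }
  assert (C2 : forall n, D n = 0%nat -> D (S n) = 0%nat).
  { intros n Hz. destruct (C1 (S n)) as [|Hmm]; auto. exfalso.
    destruct (Hr n) as [Ha [Hy Hs]].
    assert (Hup : Y (S n) <= 1) by (rewrite Hs; apply (nb_up m b); auto; lia).
    destruct (Hr (S n)) as [Ha' _].
    destruct (He (D (S n)) (proj1 Ha')) as [[E1 E2]|[E1 E2]]; [lia|].
    apply (core_a m b (Y (S n)) (D (S n))); auto. }
  assert (C3 : forall n, D n = m -> D (S n) = m).
  { intros n Hz. destruct (C1 (S n)) as [Hzz|]; auto. exfalso.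
    destruct (Hr n) as [Ha [Hy Hs]].
    assert (Hdn : MM m b - 1 <= Y (S n)) by (rewrite Hs; apply (nb_down m b); auto; lia).
    destruct (Hr (S n)) as [Ha' _].
    destruct (He (D (S n)) (proj1 Ha')) as [[E1 E2]|[E1 E2]]; [|lia].
    apply (core_b m b (Y (S n)) (D (S n))); auto. }
  destruct (C1 0%nat) as [H0|H0].
  - assert (Hall : forall n, D n = 0%nat) by (induction n; auto).
    assert (HY : forall n, Y n = b ^ n * Y 0%nat).
    { induction n; simpl. ring. destruct (Hr n) as [_ [_ Hs]]. rewrite Hs, Hall, IHn. simpl. ring. }
    destruct (Hr 0%nat) as [_ [Hy0 _]].
    destruct (pow_big b (Y 0%nat) (MM m b) Hb (proj1 Hy0)) as [N HN].
    specialize (HN N (le_n N)). destruct (Hr N) as [_ [HyN _]]. rewrite HY in HyN. lra.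
  - assert (Hall : forall n, D n = m) by (induction n; auto).
    pose proof (bM m b Hb).
    assert (HY : forall n, MM m b - Y n = b ^ n * (MM m b - Y 0%nat)).
    { induction n; simpl. ring. destruct (Hr n) as [_ [_ Hs]]. rewrite Hs, Hall.
      replace (b * b ^ n * (MM m b - Y 0%nat)) with (b * (b ^ n * (MM m b - Y 0%nat))) by ring.
      rewrite <- IHn. lra. }
    destruct (Hr 0%nat) as [_ [Hy0 _]].
    destruct (pow_big b (MM m b - Y 0%nat) (MM m b) Hb ltac:(lra)) as [N HN].
    specialize (HN N (le_n N)). destruct (Hr N) as [_ [HyN _]]. rewrite <- HY in HN. lra.
Qed.

Lemma reach : forall m b Y D, Hyp m b -> run m b Y D -> forall n0, exists n, (n0 <= n)%nat /\ brp m b (Y n).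
Proof.
  intros m b Y D Hh Hr n0. apply NNPP; intro Hno.
  apply (noinf m b (fun i => Y (n0 + i)%nat) (fun i => D (n0 + i)%nat) Hh).
  - intro i. destruct (Hr (n0 + i)%nat) as [A [B C]]. split; auto; split; auto.
    rewrite Nat.add_succ_r. auto.
  - intros i Hb. apply Hno. exists (n0 + i)%nat. split; [lia|auto].
Qed.

Lemma first_ex : forall (P : nat -> Prop) n0, (exists n, (n0 <= n)%nat /\ P n) ->
  exists n, (n0 <= n)%nat /\ P n /\ forall i, (n0 <= i < n)%nat -> ~ P i.
Proof.
  intros P n0 [n [Hle Hp]].
  replace n with (n0 + (n - n0))%nat in Hp by lia. generalize (n - n0)%nat Hp. clear n Hle Hp.
  intro k. revert n0. induction k; intros n0 Hp.
  - exists n0. rewrite Nat.add_0_r in Hp. split; [lia|]. split; auto. intros; lia.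
  - destruct (classic (P n0)) as [H|H].
    + exists n0. split; [lia|]. split; auto. intros; lia.
    + destruct (IHk (S n0)) as [n [A [B C]]]. replace (S n0 + k)%nat with (n0 + S k)%nat by lia; auto.
      exists n. split; [lia|]. split; auto. intros i Hi.
      destruct (Nat.eq_dec i n0); [subst; auto|]. apply C; lia.
Qed.

Lemma nat_sub : forall n z, 0 < z <= INR n -> exists d, (d < n)%nat /\ 0 < z - INR d <= 1.
Proof.
  induction n; intros z Hz.
  - simpl in Hz. lra.
  - rewrite S_INR in Hz. destruct (Rle_dec z (INR n)) as [H|H].
    + destruct n. simpl in H; lra.
      destruct (IHn z) as [d [A B]]; [lra|]. exists d; split; [lia|auto].
    + exists n. split; [lia|]. lra.
Qed.

Lemma exist_adm : forall m b y, 1 < b -> 1 < MM m b -> 0 < y < MM m b -> exists d, adm m b y d.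
Proof.
  intros m b y Hb HM Hy. pose proof (bM m b Hb).
  destruct (Rle_dec (b * y) (INR m)) as [H1|H1].
  - destruct (nat_sub m (b * y)) as [d [A B]]; [nra|]. exists d. split; [lia|lra].
  - exists m. split; [lia|]. nra.
Qed.

Definition adig m b y : nat := epsilon (inhabits 0%nat) (fun d => adm m b y d).
Definition bdig m b y : nat := epsilon (inhabits 0%nat) (fun d => (d < m)%nat /\ adm m b y d /\ adm m b y (S d)).
Definition isbr m b y : bool := if excluded_middle_informative (brp m b y) then true else false.
Definition dig m b y (bit : bool) : nat :=
  if isbr m b y then (if bit then S (bdig m b y) else bdig m b y) else adig m b y.

Fixpoint st m b x (s : nat -> bool) (n : nat) : R * nat :=
  match n with
  | O => (x, O)
  | S n' => let p := st m b x s n' in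
      (b * fst p - INR (dig m b (fst p) (s (snd p))),
       if isbr m b (fst p) then S (snd p) else snd p)
  end.

Definition Yf m b x s n := fst (st m b x s n).
Definition Jf m b x s n := snd (st m b x s n).
Definition Ef m b x s n := dig m b (Yf m b x s n) (s (Jf m b x s n)).

Lemma isbr_true : forall m b y, isbr m b y = true <-> brp m b y.
Proof. intros; unfold isbr; destruct (excluded_middle_informative (brp m b y)); split; intros; auto; try discriminate; contradiction. Qed.
Lemma isbr_false : forall m b y, isbr m b y = false <-> ~ brp m b y.
Proof. intros; unfold isbr; destruct (excluded_middle_informative (brp m b y)); split; intros; auto; try discriminate; contradiction. Qed.

Lemma dig_adm : forall m b y bit, 1 < b -> 1 < MM m b -> 0 < y < MM m b -> adm m b y (dig m b y bit).
Proof.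
  intros m b y bit Hb HM Hy. unfold dig.
  destruct (isbr m b y) eqn:E.
  - apply isbr_true in E.
    assert (Hs := epsilon_spec (inhabits 0%nat) (fun d => (d < m)%nat /\ adm m b y d /\ adm m b y (S d)) E).
    fold (bdig m b y) in Hs. destruct Hs as [_ [A B]]. destruct bit; auto.
  - unfold adig; apply epsilon_spec. apply exist_adm; auto.
Qed.

Lemma Yf_S : forall m b x s n, Yf m b x s (S n) = b * Yf m b x s n - INR (Ef m b x s n).
Proof. reflexivity. Qed.
Lemma Jf_S : forall m b x s n, Jf m b x s (S n) = if isbr m b (Yf m b x s n) then S (Jf m b x s n) else Jf m b x s n.
Proof. reflexivity. Qed.

Lemma st_run : forall m b x s, Hyp m b -> 0 < x < MM m b -> run m b (Yf m b x s) (Ef m b x s).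
Proof.
  intros m b x s Hh Hx. pose proof Hh as [Hb [HM _]].
  assert (Hin : forall n, 0 < Yf m b x s n < MM m b).
  { induction n. exact Hx. rewrite Yf_S. apply (dig_adm m b _ (s (Jf m b x s n))); auto. }
  intro n. split; [apply dig_adm; auto|]. split; [auto | apply Yf_S].
Qed.

Lemma hit : forall m b x s, Hyp m b -> 0 < x < MM m b ->
  forall p, exists n, Jf m b x s n = p /\ brp m b (Yf m b x s n).
Proof.
  intros m b x s Hh Hx.
  assert (Hr := st_run m b x s Hh Hx).
  assert (Hnext : forall n0, exists n, Jf m b x s n = Jf m b x s n0 /\ brp m b (Yf m b x s n)).
  { intro n0. destruct (first_ex (fun n => brp m b (Yf m b x s n)) n0 (reach m b _ _ Hh Hr n0)) as [n [A [B C]]].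
    exists n. split; auto.
    assert (Hc : forall i, (n0 + i <= n)%nat -> Jf m b x s (n0 + i) = Jf m b x s n0).
    { induction i; intro Hi. rewrite Nat.add_0_r; auto.
      rewrite Nat.add_succ_r, Jf_S.
      assert (Hn : isbr m b (Yf m b x s (n0 + i)) = false) by (apply isbr_false, C; lia).
      rewrite Hn. apply IHi. lia. }
    replace n with (n0 + (n - n0))%nat by lia. apply Hc. lia. }
  induction p.
  - destruct (Hnext 0%nat) as [n [A B]]. exists n; split; auto.
  - destruct IHp as [n [A B]]. destruct (Hnext (S n)) as [n' [A' B']].
    exists n'. split; auto. rewrite A', Jf_S.
    assert (isbr m b (Yf m b x s n) = true) by (apply isbr_true; auto).
    rewrite H, A. reflexivity.
Qed.

Lemma Ef_inj : forall m b x s t, Hyp m b -> 0 < x < MM m b ->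
  Ef m b x s = Ef m b x t -> s = t.
Proof.
  intros m b x s t Hh Hx HE.
  assert (Hst : forall n, Yf m b x s n = Yf m b x t n /\ Jf m b x s n = Jf m b x t n).
  { induction n. split; reflexivity.
    destruct IHn as [A B]. rewrite !Yf_S, !Jf_S.
    assert (Ef m b x s n = Ef m b x t n) by (rewrite HE; reflexivity).
    rewrite H, A, B. split; reflexivity. }
  apply functional_extensionality. intro p.
  destruct (hit m b x s Hh Hx p) as [n [A B]].
  destruct (Hst n) as [C D].
  assert (E : Ef m b x s n = Ef m b x t n) by (rewrite HE; reflexivity).
  unfold Ef, dig in E. rewrite <- C in E. rewrite <- D, A in E.
  assert (isbr m b (Yf m b x s n) = true) by (apply isbr_true; auto).
  rewrite H in E.
  destruct (s p), (t p); auto; lia.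
Qed.

Lemma Ef_exp : forall m b x s, Hyp m b -> 0 < x < MM m b -> Sigma b m x (Ef m b x s).
Proof.
  intros m b x s Hh Hx. pose proof Hh as [Hb _].
  assert (Hr := st_run m b x s Hh Hx).
  split.
  - intro i. destruct (Hr i) as [[A _] _]. exact A.
  - change x with (Yf m b x s 0%nat) at 2.
    apply (run_exp b _ _ (MM m b) Hb).
    + intro n. destruct (Hr n) as [_ [_ C]]. exact C.
    + intro n. destruct (Hr n) as [_ [C _]]. rewrite Rabs_right; lra.
Qed.

Lemma uncount : forall m b x, Hyp m b -> 0 < x < MM m b -> uncountable_set (Sigma b m x).
Proof.
  intros m b x Hh Hx [f Hf].
  apply (cantor (fun s => f (Ef m b x s))).
  intros s t H. apply (Ef_inj m b x s t Hh Hx).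
  apply Hf; auto; apply Ef_exp; auto.
Qed.

Lemma MM_eq : forall m b, 1 < b -> MM m b * (b - 1) = INR m.
Proof. intros; unfold MM; field; lra. Qed.

Lemma hyp_even : forall k b, (1 <= k)%nat -> 1 < b < INR k + 1 -> Hyp (2 * k) b.
Proof.
  intros k b Hk Hb.
  assert (HK : 1 <= INR k) by (apply (le_INR 1); auto).
  assert (HIm : INR (2 * k) = 2 * INR k) by (rewrite mult_INR; simpl; ring).
  pose proof (MM_eq (2 * k) b (proj1 Hb)) as HE. rewrite HIm in HE.
  set (M := MM (2 * k) b) in *.
  assert (HM1 : 1 < M) by nra.
  assert (Hc : (b - M - (INR k - 1)) * (b - 1) < 0) by nra.
  assert (Hd : b - M < INR k - 1).
  { apply Rnot_le_lt; intro. assert (0 <= (b - M - (INR k - 1)) * (b - 1)) by (apply Rmult_le_pos; lra). lra. }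
  split; [lra|]. split; [exact HM1|]. split; [lia|].
  intros e He. rewrite HIm. fold M. destruct (Nat.lt_ge_cases e k) as [Hl|Hl].
  - left. split; [lia|]. apply le_INR in Hl. rewrite S_INR in Hl. lra.
  - right. split; [lia|]. assert (Hl' : (k <= e)%nat) by lia. apply le_INR in Hl'. lra.
Qed.

Lemma hyp_odd : forall k b, 1 < b -> b * b - (INR k + 1) * b - (INR k + 1) < 0 -> Hyp (2 * k + 1) b.
Proof.
  intros k b Hb Hq.
  assert (HK : 0 <= INR k) by apply pos_INR.
  assert (HIm : INR (2 * k + 1) = 2 * INR k + 1) by (rewrite plus_INR, mult_INR; simpl; ring).
  pose proof (MM_eq (2 * k + 1) b Hb) as HE. rewrite HIm in HE.
  set (M := MM (2 * k + 1) b) in *.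
  assert (Hb2 : b < 2 * INR k + 2) by nra.
  assert (HM1 : 1 < M) by nra.
  assert (Hc : (b - M - INR k) * (b - 1) < 0) by nra.
  assert (Hd : b - M < INR k).
  { apply Rnot_le_lt; intro. assert (0 <= (b - M - INR k) * (b - 1)) by (apply Rmult_le_pos; lra). lra. }
  split; [lra|]. split; [exact HM1|]. split; [lia|].
  intros e He. rewrite HIm. fold M. destruct (Nat.le_gt_cases e k) as [Hl|Hl].
  - left. split; [lia|]. apply le_INR in Hl. lra.
  - right. split; [lia|]. assert (Hl' : (S k <= e)%nat) by lia. apply le_INR in Hl'. rewrite S_INR in Hl'. lra.
Qed.

Lemma single_even : forall k b, (1 <= k)%nat -> INR k + 1 < b ->
  exists x, 0 < x < INR (2 * k) / (b - 1) /\ singleton_set (Sigma b (2 * k) x).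
Proof.
  intros k b Hk Hb.
  assert (HK : 1 <= INR k) by (apply (le_INR 1); auto).
  assert (HIm : INR (2 * k) = 2 * INR k) by (rewrite mult_INR; simpl; ring).
  assert (Hb1 : 1 < b) by lra.
  set (p := INR k / (b - 1)).
  assert (Hp1 : p < 1) by (unfold p; apply (Rmult_lt_reg_r (b - 1)); [lra|]; field_simplify; lra).
  assert (Hp0 : 0 < p) by (unfold p; apply Rdiv_lt_0_compat; lra).
  assert (HMp : MM (2 * k) b = 2 * p) by (unfold MM, p; rewrite HIm; field; lra).
  assert (HY : forall n : nat, (fun _ : nat => p) (S n) = b * (fun _ : nat => p) n - INR ((fun _ : nat => k) n)).
  { intro n. simpl. unfold p. field. lra. }
  exists p. split.
  { fold (MM (2 * k) b). rewrite HMp. lra. }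
  exists (fun _ => k). split.
  - split.
    + intro i. lia.
    + apply (run_exp b (fun _ => p) (fun _ => k) 1 Hb1 HY). intro n. rewrite Rabs_right; lra.
  - intros e He. apply (unique_exp (2 * k) b p (fun _ => p) (fun _ => k) Hb1 eq_refl HY); auto.
    intro n. rewrite HMp. lra.
Qed.

Lemma single_odd : forall k b, 1 < b -> b * b - (INR k + 1) * b - (INR k + 1) > 0 ->
  exists x, 0 < x < INR (2 * k + 1) / (b - 1) /\ singleton_set (Sigma b (2 * k + 1) x).
Proof.
  intros k b Hb Hq.
  assert (HK : 0 <= INR k) by apply pos_INR.
  assert (HIm : INR (2 * k + 1) = 2 * INR k + 1) by (rewrite plus_INR, mult_INR; simpl; ring).
  set (K := INR k) in *.
  set (p := ((K + 1) * b + K) / (b * b - 1)).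
  set (q := (K * b + K + 1) / (b * b - 1)).
  assert (Hbb : 0 < b * b - 1) by nra.
  assert (E1 : 1 - p = (b * b - (K + 1) * b - (K + 1)) / (b * b - 1)) by (unfold p; field; lra).
  assert (E2 : p - q = (b - 1) / (b * b - 1)) by (unfold p, q; field; lra).
  assert (E3 : q = (K * b + K + 1) / (b * b - 1)) by reflexivity.
  assert (Hp1 : p < 1) by (assert (0 < (b * b - (K + 1) * b - (K + 1)) / (b * b - 1)) by (apply Rdiv_lt_0_compat; lra); lra).
  assert (Hqp : q < p) by (assert (0 < (b - 1) / (b * b - 1)) by (apply Rdiv_lt_0_compat; lra); lra).
  assert (Hq0 : 0 < q) by (rewrite E3; apply Rdiv_lt_0_compat; nra).
  assert (HM : MM (2 * k + 1) b = p + q) by (unfold MM, p, q; fold K; rewrite HIm; field; lra).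
  set (Y := fun n : nat => if Nat.even n then p else q).
  set (a := fun n : nat => if Nat.even n then S k else k).
  assert (HY : forall n, Y (S n) = b * Y n - INR (a n)).
  { intro n. unfold Y, a. rewrite Nat.even_succ, <- Nat.negb_even.
    destruct (Nat.even n); simpl negb; cbv iota.
    - rewrite S_INR. fold K. unfold p, q. field. lra.
    - fold K. unfold p, q. field. lra. }
  assert (HYb : forall n, MM (2 * k + 1) b - 1 < Y n < 1).
  { intro n. rewrite HM. unfold Y. destruct (Nat.even n); lra. }
  exists p. split.
  { fold (MM (2 * k + 1) b). rewrite HM. lra. }
  exists a. split.
  - split.
    + intro i. unfold a. destruct (Nat.even i); lia.
    + apply (run_exp b Y a 1 Hb HY). intro n. unfold Y. destruct (Nat.even n); rewrite Rabs_right; lra.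
  - intros e He. apply (unique_exp (2 * k + 1) b p Y a Hb eq_refl HY HYb); auto.
Qed.

Theorem theorem1p1 :
  forall m : nat, (1 <= m)%nat ->
    exists G : R, is_generalised_golden_ratio m G /\
      (forall k : nat, m = (2 * k)%nat -> G = INR k + 1) /\
      (forall k : nat, m = (2 * k + 1)%nat ->
         G = (INR k + 1 + sqrt (INR k ^ 2 + 6 * INR k + 5)) / 2).
Proof.
  intros m Hm. destruct (Nat.Even_or_Odd m) as [[k Hk]|[k Hk]].
  - subst m. assert (Hk1 : (1 <= k)%nat) by lia.
    exists (INR k + 1). split; [split|split].
    + intros b Hb x Hx. apply uncount; [apply hyp_even; auto | exact Hx].
    + intros b [Hb1 Hb2]. apply single_even; auto.
    + intros k' Hk'. assert (k' = k) by lia. subst; reflexivity.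
    + intros k' Hk'. lia.
  - subst m.
    set (K := INR k).
    assert (HK : 0 <= K) by apply pos_INR.
    set (s := sqrt (K ^ 2 + 6 * K + 5)).
    assert (Hs2 : s * s = K ^ 2 + 6 * K + 5) by (apply sqrt_sqrt; nra).
    assert (Hs0 : 0 <= s) by apply sqrt_pos.
    assert (Hs1 : K + 1 < s) by nra.
    assert (HQ : forall b, b * b - (K + 1) * b - (K + 1) = (b - (K + 1 + s) / 2) * (b - (K + 1 - s) / 2)) by (intro; nra).
    exists ((K + 1 + s) / 2). split; [split|split].
    + intros b [Hb1 Hb2] x Hx. apply uncount; [apply hyp_odd; auto | exact Hx].
      rewrite HQ. assert (b - (K + 1 - s) / 2 > 0) by lra. nra.
    + intros b [Hb1 Hb2]. apply single_odd.
      * assert ((K + 1 + s) / 2 > 1) by lra. lra.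
      * fold K. rewrite HQ. assert (b - (K + 1 - s) / 2 > 0) by lra. nra.
    + intros k' Hk'. lia.
    + intros k' Hk'. assert (k' = k) by lia. subst. reflexivity.
Qed.
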